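(* Let $x_1<x_2$, $b_1,b_2\in\mathbb{R}$ and $m>0$ with $|b_2-b_1|\leq m(x_2-x_1)$. Let $x_0=\frac12(x_1+x_2)+\frac1{2m}(b_2-b_1)\in[x_1,x_2]$ and $b_0=\frac12(b_1+b_2)+\frac12m(x_2-x_1)$. If $B$ is a Brownian bridge (diffusion parameter one) on $[x_1,x_2]$ with $B(x_1)=b_1$, $B(x_2)=b_2$, and $N$ is a standard Gaussian random variable, then $$\mathbb{P}\big(B(x_0)\geq b_0\big)\geq\mathbb{P}\big(N\geq(x_2-x_1)^{1/2}m\big).$$ *)

(* Defs.v *)
From HB Require Import structures.
From mathcomp Require Import all_boot all_order all_algebra.
From mathcomp Require Import all_classical all_reals all_analysis.
Set Implicit Arguments. Unset Strict Implicit. Unset Printing Implicit Defensive.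
Import Order.TTheory GRing.Theory Num.Theory.
Import numFieldTopology.Exports.
Local Open Scope classical_set_scope.
Local Open Scope ring_scope.

Definition gaussian_law d (T : measurableType d) (R : realType)
    (P : probability T R) (f : T -> R) (mu v : R) : Prop :=
  measurable_fun setT f /\ 0 <= v /\
  forall A : set R, measurable A ->
    P (f @^-1` A) = (if v == 0 then \d_mu A else normal_prob mu (Num.sqrt v) A).

Definition bb_mean (R : realType) (x1 x2 b1 b2 t : R) : R :=
  b1 + (t - x1) / (x2 - x1) * (b2 - b1).
Definition bb_cov (R : realType) (x1 x2 s t : R) : R :=
  (Num.min s t - x1) * (x2 - Num.max s t) / (x2 - x1).

(* B is a Brownian bridge on [x1,x2] with B(x1)=b1, B(x2)=b2: a Gaussian
   process (every finite linear combination of its values is Gaussian) with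
   the bridge mean and covariance, whose sample paths are continuous. *)
Definition brownian_bridge d (T : measurableType d) (R : realType)
    (P : probability T R) (x1 x2 b1 b2 : R) (B : R -> T -> R) : Prop :=
  (forall w, {within `[x1, x2]%classic, continuous (fun t : R => B t w)}) /\
  forall s : seq (R * R),
    all (fun p => p.2 \in `[x1, x2]) s ->
    gaussian_law P (fun w => \sum_(p <- s) p.1 * B p.2 w)
      (\sum_(p <- s) p.1 * bb_mean x1 x2 b1 b2 p.2)
      (\sum_(p <- s) \sum_(q <- s) p.1 * q.1 * bb_cov x1 x2 p.2 q.2).

(* Main.v *)
Require Import Defs.
From HB Require Import structures.
From mathcomp Require Import all_boot all_order all_algebra.
From mathcomp Require Import all_classical all_reals all_analysis.
From mathcomp Require Import ring lra.
Import Order.TTheory GRing.Theory Num.Theory.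
Import numFieldTopology.Exports.
Local Open Scope classical_set_scope.
Local Open Scope ring_scope.

Section S.
Context {R : realType}.
Lemma F'E (mu s : R) : (fun y : R => mu + s * y)^`()%classic = cst s.
Proof.
apply/funext => x; rewrite derive1E deriveD// derive_cst add0r.
rewrite deriveM// derive_id derive_cst scaler0 addr0. by rewrite /GRing.scale /= mulr1.
Qed.

Lemma normal_shift (mu s a : R) : 0 < s ->
  normal_prob mu s `[mu + s * a, +oo[ = normal_prob 0 1 `[a, +oo[.
Proof.
move=> s0.
rewrite /normal_prob.
have := @increasing_ge0_integration_by_substitutiony R (fun y => mu + s * y) (normal_pdf mu s) a.
rewrite F'E /= => ->; last first.
- by move=> x _; exact: normal_pdf_ge0.
- by apply: continuous_subspaceT; exact: continuous_normal_pdf (lt0r_neq0 s0).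
- apply/cvgryPge => A; near=> x.
  have hx : (A - mu) / s <= x by near: x; apply: nbhs_pinfty_ge; rewrite num_real.
  by move: hx; rewrite ler_pdivrMr// => hx; lra.
  Unshelve. all: end_near.
- split.
    by move=> x _; apply: derivableD; [exact: derivable_cst|apply: derivableM; [exact: derivable_cst|exact: derivable_id]].
  apply: cvg_at_right_filter; apply: cvgD; [exact: cvg_cst| apply: cvgM; [exact: cvg_cst | exact: cvg_id]].
- exact: is_cvg_cst.
- exact: is_cvg_cst.
- by move=> x _; exact: cst_continuous.
- by move=> x y _ _ xy; rewrite ltrD2l ltr_pM2l.
apply: eq_integral => x _; congr EFin.
rewrite /normal_pdf /= gt_eqF// oner_eq0 /= /normal_peak /normal_fun.
rewrite !fctE /=.
have -> : - (mu + s * x - mu) ^+ 2 / (s ^+ 2 *+ 2) = - (x - 0) ^+ 2 / (1 ^+ 2 *+ 2).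
  by field; rewrite gt_eqF.
rewrite -!mulrnAr expr1n mul1r sqrtrM ?sqr_ge0// sqrtr_sqr gtr0_norm//.
have hp : 0 < Num.sqrt (pi *+ 2 : R) by rewrite sqrtr_gt0 mulrn_wgt0// pi_gt0.
set e := expR _; rewrite mul1r; field; rewrite !gt_eqF //=; apply/andP; split.
Qed.
End S.


Theorem mainTheorem12 (R : realType) (d : measure_display) (T : measurableType d)
    (P : probability T R) (x1 x2 b1 b2 m : R) (B : R -> T -> R) :
  x1 < x2 -> 0 < m -> `|b2 - b1| <= m * (x2 - x1) ->
  brownian_bridge P x1 x2 b1 b2 B ->
  let x0 := 2^-1 * (x1 + x2) + (2 * m)^-1 * (b2 - b1) in
  let b0 := 2^-1 * (b1 + b2) + 2^-1 * m * (x2 - x1) in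
  (normal_prob 0 1 [set y : R | (Num.sqrt (x2 - x1) * m <= y)%R]
     <= P [set w | (b0 <= B x0 w)%R])%E.
Proof.
move=> hx hm hb [_ hBB]; cbv zeta.
set x0 := 2^-1 * (x1 + x2) + (2 * m)^-1 * (b2 - b1).
set b0 := 2^-1 * (b1 + b2) + 2^-1 * m * (x2 - x1).
move: hb; rewrite ler_norml => /andP[h1 h2].
have hL : 0 < x2 - x1 by rewrite subr_gt0.
have e1 : x0 - x1 = (m * (x2 - x1) + (b2 - b1)) / (2 * m).
  by rewrite /x0; field; rewrite gt_eqF.
have e2 : x2 - x0 = (m * (x2 - x1) - (b2 - b1)) / (2 * m).
  by rewrite /x0; field; rewrite gt_eqF.
have p0 : 0 <= x0 - x1 by rewrite e1 divr_ge0 //; [lra | rewrite mulr_ge0 // ltW].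
have q0 : 0 <= x2 - x0 by rewrite e2 divr_ge0 //; [lra | rewrite mulr_ge0 // ltW].
have hx0 : x0 \in `[x1, x2] by rewrite in_itv /=; apply/andP; split; lra.
have := hBB [:: (1, x0)]; rewrite /= hx0 => /(_ isT) [_ [v0 G]].
rewrite !big_seq1 /= !mul1r in v0 G.
have -> : [set w | b0 <= B x0 w] =
   (fun w => \sum_(p <- [:: (1, x0)]) p.1 * B p.2 w) @^-1` [set y | b0 <= y].
  by apply/funext => w; rewrite /preimage /= big_seq1 mul1r.
have mA : forall c : R, measurable [set y : R | c <= y].
  by move=> c; rewrite -set_itvcy.
rewrite G //.
set mu := bb_mean x1 x2 b1 b2 x0.
set v := bb_cov x1 x2 x0 x0.
have I1 : b0 - mu = 2 * m * v.
  rewrite /mu /v /bb_mean /bb_cov minxx maxxx /b0 /x0; field.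
  by rewrite !gt_eqF.
have I2 : 4 * v <= x2 - x1.
  rewrite /v /bb_cov minxx maxxx mulrA ler_pdivrMr //.
  have := sqr_ge0 ((x0 - x1) - (x2 - x0)); rewrite expr2; nra.
case: ifPn => [/eqP v00|vn0].
  have -> : b0 = mu by apply/eqP; rewrite -subr_eq0 I1 v00 mulr0.
  rewrite diracE.
  have -> : mu \in [set y | mu <= y] by rewrite in_setE /=.
  have := @probability_le1 _ _ R (normal_prob (0:R) 1) _ (mA (Num.sqrt (x2 - x1) * m)). by [].
have vp : 0 < v by rewrite lt_def vn0.
have sp : 0 < Num.sqrt v by rewrite sqrtr_gt0.
set a := (b0 - mu) / Num.sqrt v.
have -> : [set y | b0 <= y] = `[mu + Num.sqrt v * a, +oo[%classic.
  have eb : mu + Num.sqrt v * a = b0 by rewrite /a; field; rewrite gt_eqF.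
  by rewrite eb set_itvcy.
rewrite normal_shift //.
apply: le_measure; rewrite ?inE //=; first by rewrite -set_itvcy.
rewrite set_itvcy => y /= hy; apply: le_trans hy.
have sv2 : Num.sqrt v ^+ 2 = v by rewrite sqr_sqrtr // ltW.
have sL2 : Num.sqrt (x2 - x1) ^+ 2 = x2 - x1 by rewrite sqr_sqrtr // ltW.
have sL0 : 0 <= Num.sqrt (x2 - x1) by rewrite sqrtr_ge0.
have -> : a = 2 * m * Num.sqrt v.
  by rewrite /a I1 -{1}sv2; field; rewrite gt_eqF.
rewrite -sv2 -sL2 in I2.
nra.
Qed.
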